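(* Fix a start pose $\mathbf{p}_0=(x_0,y_0,\theta_0)$ and CCC inputs $\mathbf{u}_i=(v_i,\omega_i)$, $i=1,2,3$, with $v_i>0$, $\omega_i\neq0$, $\operatorname{sign}\omega_1\neq\operatorname{sign}\omega_2$, $\operatorname{sign}\omega_2\neq\operatorname{sign}\omega_3$. A pose $\mathbf{p}_f=(x_f,y_f,\theta_f)$ is reachable from $\mathbf{p}_0$ by the CCC path with these inputs if and only if $$r_{31}^2\ \le\ (x_f-c)^2+(y_f-d)^2\ \le\ (r_{12}-r_{23})^2,$$ where $c=x_0-r_1\sin\theta_0+r_3\sin\theta_f$ and $d=y_0+r_1\cos\theta_0-r_3\cos\theta_f$.
   Context: A pose is $\mathbf{p}=(x,y,\theta)$, heading understood modulo $2\pi$. An input is $\mathbf{u}=(v,\omega)$. The motion primitive $\mathrm{M}_{\mathbf{u},\tau}$ maps $(x,y,\theta)$ to: if $\omega\neq0$, $\big(x-\frac{v}{\omega}(\sin\theta-\sin(\theta+\omega\tau)),\ y+\frac{v}{\omega}(\cos\theta-\cos(\theta+\omega\tau)),\ \theta+\omega\tau\big)$; if $\omega=0$, $(x+v\tau\cos\theta,\ y+v\tau\sin\theta,\ \theta)$. For a fixed path type with fixed inputs $\mathbf{u}_1,\mathbf{u}_2,\mathbf{u}_3$, a pose $\mathbf{p}_f$ is reachable from $\mathbf{p}_0$ if there exist durations $\tau_1,\tau_2,\tau_3\ge0$, with $|\omega_i\tau_i|<2\pi$ for each turning segment, such that $\mathrm{M}_{\mathbf{u}_3,\tau_3}(\mathrm{M}_{\mathbf{u}_2,\tau_2}(\mathrm{M}_{\mathbf{u}_1,\tau_1}(\mathbf{p}_0)))$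 has position $(x_f,y_f)$ and heading congruent to $\theta_f$ modulo $2\pi$. Notation: $r_i=v_i/\omega_i$, $r_{ij}=r_i-r_j$. *)

(* Defs.v *)
From Stdlib Require Import Reals Lra.
Open Scope R_scope.

Definition pose : Type := (R * R * R)%type.

Definition motion (v w tau : R) (p : pose) : pose :=
  let '(x, y, th) := p in
  if Req_EM_T w 0 then (x + v * tau * cos th, y + v * tau * sin th, th)
  else (x - v / w * (sin th - sin (th + w * tau)),
        y + v / w * (cos th - cos (th + w * tau)),
        th + w * tau).

Definition sgn (x : R) : R :=
  if Rlt_dec 0 x then 1 else if Rlt_dec x 0 then -1 else 0.

Definition admissible (w tau : R) : Prop :=
  0 <= tau /\ (w <> 0 -> Rabs (w * tau) < 2 * PI).

Definition reachable3 (v1 w1 v2 w2 v3 w3 : R) (p0 pf : pose) : Prop :=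
  exists t1 t2 t3 : R,
    admissible w1 t1 /\ admissible w2 t2 /\ admissible w3 t3 /\
    let '(x, y, th) := motion v3 w3 t3 (motion v2 w2 t2 (motion v1 w1 t1 p0)) in
    let '(xf, yf, thf) := pf in
    x = xf /\ y = yf /\ exists k : Z, th = thf + 2 * PI * IZR k.

(* Main.v *)
Require Import Defs.
From Stdlib Require Import Reals Lra Lia ZArith.

Lemma INR_absnat k : INR (Z.abs_nat k) = Rabs (IZR k).
Proof. rewrite INR_IZR_INZ, Zabs2Nat.id_abs, abs_IZR. reflexivity. Qed.

Lemma sinZ x k : sin (x + 2 * PI * IZR k) = sin x /\ cos (x + 2 * PI * IZR k) = cos x.
Proof.
  pose proof (INR_absnat k) as H.
  destruct (Rle_dec 0 (IZR k)) as [Hk|Hk].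
  - rewrite Rabs_right in H by lra.
    replace (x + 2 * PI * IZR k) with (x + 2 * INR (Z.abs_nat k) * PI) by (rewrite H; ring).
    split; [apply sin_period | apply cos_period].
  - rewrite Rabs_left in H by lra.
    pose proof (sin_period (x + 2 * PI * IZR k) (Z.abs_nat k)).
    pose proof (cos_period (x + 2 * PI * IZR k) (Z.abs_nat k)).
    replace (x + 2 * PI * IZR k + 2 * INR (Z.abs_nat k) * PI) with x in * by (rewrite H; ring).
    split; congruence.
Qed.

Lemma unit_angle s c : s^2 + c^2 = 1 -> exists phi, sin phi = s /\ cos phi = c.
Proof.
  intros H.
  assert (Hc : -1 <= c <= 1) by nra.
  assert (Hq : sqrt (1 - c²) = Rabs s).
  { rewrite <- sqrt_Rsqr_abs. f_equal. unfold Rsqr. nra. }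
  destruct (Rle_dec 0 s).
  - exists (acos c). rewrite sin_acos, cos_acos by lra. rewrite Hq, Rabs_right by lra. auto.
  - exists (- acos c). rewrite sin_neg, cos_neg, sin_acos, cos_acos by lra.
    rewrite Hq, Rabs_left by lra. split; ring.
Qed.

Lemma red_angle d : exists k : Z, 0 <= d + 2 * PI * IZR k < 2 * PI.
Proof.
  pose proof PI_RGT_0.
  destruct (archimed (d / (2*PI))) as [H1 H2].
  exists (1 - up (d / (2*PI)))%Z. rewrite minus_IZR.
  set (z := IZR (up (d / (2 * PI)))) in *.
  assert (E : d = (d / (2*PI)) * (2*PI)) by (field; lra).
  set (q := d / (2*PI)) in *. rewrite E. split; nra.
Qed.

Lemma angle_reach w a b : w <> 0 ->
  exists t k, (0 <= t /\ (w <> 0 -> Rabs (w * t) < 2 * PI)) /\ a + w * t = b + 2 * PI * IZR k.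
Proof.
  intros Hw. pose proof PI_RGT_0.
  destruct (Rlt_dec 0 w).
  - destruct (red_angle (b - a)) as [k Hk].
    exists ((b - a + 2 * PI * IZR k) / w), k. split; [split|].
    + apply Rmult_le_pos; [lra| left; apply Rinv_0_lt_compat; lra].
    + intros _. replace (w * ((b - a + 2 * PI * IZR k) / w)) with (b - a + 2 * PI * IZR k) by (field; lra).
      rewrite Rabs_right; lra.
    + field; lra.
  - destruct (red_angle (a - b)) as [k Hk].
    exists ((b - a - 2 * PI * IZR k) / w), (-k)%Z. rewrite opp_IZR. split; [split|].
    + replace ((b - a - 2 * PI * IZR k) / w) with ((a - b + 2 * PI * IZR k) / (- w)) by (field; lra).
      apply Rmult_le_pos; [lra| left; apply Rinv_0_lt_compat; lra].
    + intros _. replace (w * ((b - a - 2 * PI * IZR k) / w)) with (- (a - b + 2 * PI * IZR k)) by (field; lra).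
      rewrite Rabs_Ropp, Rabs_right; lra.
    + field; lra.
Qed.
Lemma two_circle a b X Y : a * b < 0 ->
  (a + b)^2 <= X^2 + Y^2 -> X^2 + Y^2 <= (a - b)^2 ->
  exists p1 p2, a * sin p1 + b * sin p2 = X /\ -(a * cos p1 + b * cos p2) = Y.
Proof.
  intros Hab Hl Hu.
  assert (Ha : a <> 0) by (intro; subst; lra).
  assert (Hb : b <> 0) by (intro; subst; lra).
  set (r := X^2 + Y^2) in *.
  destruct (Req_dec r 0) as [H0|H0].
  - exists 0, 0. rewrite sin_0, cos_0.
    assert (X = 0 /\ Y = 0) as [-> ->] by (unfold r in H0; nra).
    assert (a + b = 0) by nra. split; lra.
  - assert (Hr : 0 < r) by (unfold r in *; nra).
    assert (Ha2 : 0 < a^2) by (destruct (Rlt_dec 0 a); nra).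
    assert (H4 : 0 < 4 * a^2 * r) by (apply Rmult_lt_0_compat; lra).
    set (N := r + a^2 - b^2).
    set (al := N / (2 * a * r)).
    assert (Hid : 4 * a^2 * r - N^2 = - ((r - (a+b)^2) * (r - (a-b)^2))) by (unfold N; ring).
    assert (HN : N^2 <= 4 * a^2 * r) by (assert (0 <= (r - (a+b)^2) * ((a-b)^2 - r)) by (apply Rmult_le_pos; lra); nra).
    assert (Hal : al^2 * r <= 1).
    { unfold al. replace ((N / (2 * a * r))^2 * r) with (N^2 / (4 * a^2 * r)) by (field; lra).
      apply (Rmult_le_reg_r (4 * a^2 * r)). lra.
      unfold Rdiv. rewrite Rmult_assoc, Rinv_l by lra. lra. }
    set (be := sqrt (1 / r - al^2)).
    assert (Hbe : be^2 = 1 / r - al^2).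
    { unfold be. rewrite <- Rsqr_pow2. apply Rsqr_sqrt.
      apply (Rmult_le_reg_r r); [lra|]. unfold Rdiv. rewrite Rmult_minus_distr_r, Rmult_assoc, Rinv_l by lra. lra. }
    set (p := al * X - be * Y). set (q := al * Y + be * X).
    assert (Hpq : p^2 + q^2 = 1).
    { replace (p^2 + q^2) with ((al^2 + be^2) * r) by (unfold p, q, r; ring).
      rewrite Hbe. field; lra. }
    assert (Hal2 : 2 * a * al * r = N) by (unfold al; field; lra).
    destruct (unit_angle p (-q)) as [p1 [Hs1 Hc1]]. nra.
    destruct (unit_angle ((X - a * p) / b) (- ((Y - a * q) / b))) as [p2 [Hs2 Hc2]].
    { replace (((X - a * p) / b) ^ 2 + (- ((Y - a * q) / b)) ^ 2)
        with ((r - 2 * a * (p * X + q * Y) + a^2 * (p^2 + q^2)) / b^2) by (unfold r; field; lra).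
      replace (p * X + q * Y) with (al * r) by (unfold p, q, r; ring).
      rewrite Hpq. replace (r - 2 * a * (al * r) + a ^ 2 * 1) with (r - 2 * a * al * r + a^2) by ring.
      rewrite Hal2. unfold N. field. lra. }
    exists p1, p2. rewrite Hs1, Hc1, Hs2, Hc2. split; field; lra.
Qed.

Lemma motion_turn v w t x y th : w <> 0 ->
  motion v w t (x, y, th) = (x - v / w * (sin th - sin (th + w * t)),
        y + v / w * (cos th - cos (th + w * t)), th + w * t).
Proof. intros Hw. unfold motion. destruct (Req_EM_T w 0); [contradiction|reflexivity]. Qed.

Lemma sgn_neg x y : x <> 0 -> y <> 0 -> sgn x <> sgn y -> x * y < 0.
Proof.
  intros Hx Hy H. unfold sgn in H.
  destruct (Rlt_dec 0 x), (Rlt_dec 0 y); try (destruct H; reflexivity);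
  try destruct (Rlt_dec x 0); try destruct (Rlt_dec y 0); try nra;
  try (destruct H; reflexivity); lra.
Qed.

Theorem theorem2 (x0 y0 th0 v1 w1 v2 w2 v3 w3 xf yf thf : R) :
  0 < v1 -> 0 < v2 -> 0 < v3 ->
  w1 <> 0 -> w2 <> 0 -> w3 <> 0 ->
  sgn w1 <> sgn w2 -> sgn w2 <> sgn w3 ->
  let r1 := v1 / w1 in let r2 := v2 / w2 in let r3 := v3 / w3 in
  let c := x0 - r1 * sin th0 + r3 * sin thf in
  let d := y0 + r1 * cos th0 - r3 * cos thf in
  (reachable3 v1 w1 v2 w2 v3 w3 (x0, y0, th0) (xf, yf, thf) <->
   (r3 - r1) ^ 2 <= (xf - c) ^ 2 + (yf - d) ^ 2 /\
   (xf - c) ^ 2 + (yf - d) ^ 2 <= ((r1 - r2) - (r2 - r3)) ^ 2).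
Proof.
  intros Hv1 Hv2 Hv3 Hw1 Hw2 Hw3 S12 S23 r1 r2 r3 c d.
  pose proof (sgn_neg _ _ Hw1 Hw2 S12) as P12.
  pose proof (sgn_neg _ _ Hw2 Hw3 S23) as P23.
  assert (R1 : r1 * w1 = v1) by (unfold r1; field; auto).
  assert (R2 : r2 * w2 = v2) by (unfold r2; field; auto).
  assert (R3 : r3 * w3 = v3) by (unfold r3; field; auto).
  assert (Q12 : r1 * r2 < 0).
  { assert (0 < (r1 * w1) * (r2 * w2)) by nra.
    replace ((r1 * w1) * (r2 * w2)) with ((r1 * r2) * (w1 * w2)) in H by ring. nra. }
  assert (Q23 : r2 * r3 < 0).
  { assert (0 < (r2 * w2) * (r3 * w3)) by nra.
    replace ((r2 * w2) * (r3 * w3)) with ((r2 * r3) * (w2 * w3)) in H by ring. nra. }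
  assert (Q13 : 0 < r1 * r3).
  { assert (0 < (r1 * r2) * (r2 * r3)) by nra.
    replace ((r1 * r2) * (r2 * r3)) with ((r1 * r3) * (r2 * r2)) in H by ring.
    assert (0 < r2 * r2) by nra. nra. }
  set (a := r1 - r2). set (b := r2 - r3).
  assert (Hab : a * b < 0) by (unfold a, b; nra).
  replace (r3 - r1) with (- (a + b)) by (unfold a, b; ring).
  replace ((-(a+b))^2) with ((a+b)^2) by ring.
  split.
  - intros [t1 [t2 [t3 [A1 [A2 [A3 H]]]]]].
    rewrite !motion_turn in H by auto.
    destruct H as [Hx [Hy [k Hk]]].
    set (th1 := th0 + w1 * t1) in *.
    set (th2 := th1 + w2 * t2) in *.
    rewrite Hk in Hx, Hy. destruct (sinZ thf k) as [Es Ec]. rewrite Es in Hx. rewrite Ec in Hy.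
    assert (EX : xf - c = a * sin th1 + b * sin th2).
    { rewrite <- Hx. unfold c, a, b. fold r1 r2 r3. ring. }
    assert (EY : yf - d = - (a * cos th1 + b * cos th2)).
    { rewrite <- Hy. unfold d, a, b. fold r1 r2 r3. ring. }
    rewrite EX, EY.
    pose proof (sin2_cos2 th1) as T1. pose proof (sin2_cos2 th2) as T2.
    unfold Rsqr in T1, T2.
    set (K := sin th1 * sin th2 + cos th1 * cos th2).
    assert (E : (a * sin th1 + b * sin th2) ^ 2 + (- (a * cos th1 + b * cos th2)) ^ 2
              = a^2 + b^2 + 2 * a * b * K).
    { transitivity (a^2 * (sin th1 * sin th1 + cos th1 * cos th1) + b^2 * (sin th2 * sin th2 + cos th2 * cos th2) + 2 * a * b * K).
      unfold K; ring. rewrite T1, T2. ring. }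
    rewrite E.
    assert (K1 : K <= 1).
    { assert (0 <= (sin th1 - sin th2)^2 + (cos th1 - cos th2)^2) by (apply Rplus_le_le_0_compat; apply pow2_ge_0).
      replace ((sin th1 - sin th2)^2 + (cos th1 - cos th2)^2) with ((sin th1 * sin th1 + cos th1 * cos th1) + (sin th2 * sin th2 + cos th2 * cos th2) - 2 * K) in H by (unfold K; ring). lra. }
    assert (K2 : -1 <= K).
    { assert (0 <= (sin th1 + sin th2)^2 + (cos th1 + cos th2)^2) by (apply Rplus_le_le_0_compat; apply pow2_ge_0).
      replace ((sin th1 + sin th2)^2 + (cos th1 + cos th2)^2) with ((sin th1 * sin th1 + cos th1 * cos th1) + (sin th2 * sin th2 + cos th2 * cos th2) + 2 * K) in H by (unfold K; ring). lra. }
    split; nra.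
  - intros [Hl Hu].
    destruct (two_circle a b (xf - c) (yf - d) Hab Hl Hu) as [p1 [p2 [E1 E2]]].
    destruct (angle_reach w1 th0 p1 Hw1) as [t1 [k1 [A1 F1]]].
    destruct (angle_reach w2 (th0 + w1 * t1) p2 Hw2) as [t2 [k2 [A2 F2]]].
    destruct (angle_reach w3 (th0 + w1 * t1 + w2 * t2) thf Hw3) as [t3 [k3 [A3 F3]]].
    exists t1, t2, t3. split; [exact A1|]. split; [exact A2|]. split; [exact A3|].
    rewrite !motion_turn by auto.
    rewrite F3, F2, F1.
    destruct (sinZ p1 k1) as [Es1 Ec1]. destruct (sinZ p2 k2) as [Es2 Ec2].
    destruct (sinZ thf k3) as [Es3 Ec3].
    rewrite Es1, Ec1, Es2, Ec2, Es3, Ec3.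
    split; [|split].
    + fold r1 r2 r3. unfold c, a, b in E1. lra.
    + fold r1 r2 r3. unfold d, a, b in E2. lra.
    + exists k3. reflexivity.
Qed.
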